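(* Let $\mathbb{F}$ be an infinite field with $\operatorname{char}(\mathbb{F})\neq 2$, let $G$ be a group with a group involution $\ast$, extended $\mathbb{F}$-linearly to $\mathbb{F}G$. Suppose that $\mathbb{F}G$ is normal with respect to $\ast$. Then $g^2\in\zeta(G)$ for all $g\in G$.
   Context: A group involution on $G$ is a map $\ast:G\to G$ with $(gh)^\ast=h^\ast g^\ast$ and $(g^\ast)^\ast=g$ for all $g,h\in G$; it is extended $\mathbb{F}$-linearly to an algebra involution of $\mathbb{F}G$. The algebra $\mathbb{F}G$ is normal (with respect to $\ast$) if $\alpha\alpha^\ast=\alpha^\ast\alpha$ for all $\alpha\in\mathbb{F}G$. $\zeta(G)$ denotes the center of $G$. *)

(* Defs.v *)
From HB Require Import structures.
From mathcomp Require Import all_boot all_order all_algebra.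
Set Implicit Arguments. Unset Strict Implicit. Unset Printing Implicit Defensive.
Import GRing.Theory.

Definition group_involution (G : groupType) (s : G -> G) : Prop :=
  (forall g h : G, s (g * h)%g = (s h * s g)%g) /\ (forall g : G, s (s g) = g).

(* Elements of the group algebra F G are finite formal sums  sum_i a_i g_i ;
   we represent such a sum by the list of its terms (a_i, g_i).  Two lists
   represent the same element of F G iff they have the same coefficient at
   every x in G (this is how equality in F G is tested below). *)
Definition galg (F : fieldType) (G : groupType) := seq (F * G).

Definition galg_coef (F : fieldType) (G : groupType) (l : galg F G) (x : G) : F :=
  (\sum_(p <- l | p.2 == x) p.1)%R.

Definition galg_mul (F : fieldType) (G : groupType) (l1 l2 : galg F G) : galg F G :=
  [seq ((p.1 * q.1)%R, (p.2 * q.2)%g) | p <- l1, q <- l2].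

Definition galg_star (F : fieldType) (G : groupType) (s : G -> G) (l : galg F G)
  : galg F G := [seq (p.1, s p.2) | p <- l].

Definition galg_normal (F : fieldType) (G : groupType) (s : G -> G) : Prop :=
  forall (a : galg F G) (x : G),
    galg_coef (galg_mul a (galg_star s a)) x = galg_coef (galg_mul (galg_star s a) a) x.

Definition infinite_field (F : fieldType) : Prop :=
  forall s : seq F, exists x : F, x \notin s.

(* Main.v *)
Require Import Defs.
From HB Require Import structures.
From mathcomp Require Import all_boot all_order all_algebra.
From mathcomp Require Import ring.
Import GRing.Theory.
Local Open Scope ring_scope.
Lemma fin (F : fieldType) (e : F) : (2%:R:F) != 0 -> e = 0 -> (e = 2%:R \/ e = 1) -> False.
Proof. move=> t -> [] /esym /eqP; [exact/negP | by rewrite oner_eq0]. Qed.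
Section S.
Variables (F : fieldType) (G : groupType) (s : G -> G).
Hypothesis N : galg_normal F s.
Hypothesis two : (2%:R : F) != 0.
Lemma nrm x : (x * s x = s x * x)%g.
Proof.
have := N [:: (1, x)] (x * s x)%g.
rewrite /galg_coef /galg_mul /galg_star /= !big_cons !big_nil /= eqxx.
case: eqP => // _ /eqP; rewrite mulr1 addr0 oner_eq0 //.
Qed.
Lemma key x y : (x * s y = s x * y \/ x * s y = s y * x)%g.
Proof.
have := N [:: (1, x); (1,y)] (x * s y)%g.
rewrite /galg_coef /galg_mul /galg_star /= !big_cons !big_nil /= -!nrm eqxx.
have [E1|E1] := eqVneq (s x * y)%g (x * s y)%g; first by left.
have [E2|E2] := eqVneq (s y * x)%g (x * s y)%g; first by right.
rewrite !mulr1.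
case: ((x * s x)%g == (x * s y)%g); case: ((y * s x)%g == (x * s y)%g);
 case: ((y * s y)%g == (x * s y)%g); move=> /eqP; rewrite -subr_eq0 => /eqP H; exfalso; refine (@fin F _ two H _); first [left; ring | right; ring].
Qed.
End S.

Theorem lemma4 (F : fieldType) (G : groupType) (s : G -> G) :
  infinite_field F ->
  (2%:R : F)%R != 0%R ->
  group_involution s ->
  galg_normal F s ->
  forall g h : G, (g * g * h)%g = (h * (g * g))%g.
Proof.
move=> _ two [sM sK] N.
have K x y : (x * y = s x * s y \/ x * y = y * x)%g.
  by have := @key F G s N two x (s y); rewrite sK.
move=> g h.
have [E|E] := eqVneq (g * h)%g (h * g)%g.
  by rewrite -mulgA E !mulgA E.
case: (K g h) => [E1|E1]; last by rewrite E1 eqxx in E.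
case: (K g (g * h)%g) => [E2|E2]; last first.
  by move: E2; rewrite -mulgA => /mulgI E2; rewrite E2 eqxx in E.
rewrite sM [RHS]mulgA -E1 -[RHS]mulgA in E2.
move/mulgI: E2 => E2.
case: (K (h * g)%g g) => [E3|E3].
  by apply: esym; rewrite mulgA E3 sM -E1 -[LHS]mulgA -E2 mulgA.
move: E3; rewrite [RHS]mulgA E2 -!mulgA => /mulgI /mulIg E4.
by rewrite E2 -E4 eqxx in E.
Qed.
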